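(* Let $\lambda\in\mathfrak h_{\bar 0}^*\setminus\Lambda_{\mathbb Z}$. Then $\mathrm{sch}\,L(\lambda)=0$.
   Context: Let $\mathfrak g=\mathfrak q(n)$ be the queer Lie superalgebra with Cartan subalgebra $\mathfrak h=\mathfrak h_{\bar 0}\oplus\mathfrak h_{\bar 1}$, and $\{\delta_i\}$ the basis of $\mathfrak h_{\bar 0}^*$ dual to the diagonal matrix units. $\Lambda_{\mathbb Z}=\{\sum_i\lambda_i\delta_i\mid\lambda_i\in\mathbb Z\}$ is the set of integer weights. $L(\lambda)$ is the irreducible highest weight module (with respect to the standard Borel subalgebra) of highest weight $\lambda$, and $\mathrm{sch}\,M=\sum_\mu(\dim M_{\mu,\bar 0}-\dim M_{\mu,\bar 1})e^\mu$. *)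

(* Defs.v *)
From HB Require Import structures.
From mathcomp Require Import all_boot all_order all_algebra.
Set Implicit Arguments. Unset Strict Implicit. Unset Printing Implicit Defensive.
Import Order.TTheory GRing.Theory Num.Theory.
Local Open Scope ring_scope.

(* The queer Lie superalgebra q(n) has basis
     e_ij = [[E_ij, 0], [0, E_ij]]  (even),   f_ij = [[0, E_ij], [E_ij, 0]]  (odd),
   with super brackets
     [e_ij, e_kl] = d_jk e_il - d_li e_kj
     [e_ij, f_kl] = d_jk f_il - d_li f_kj
     [f_ij, f_kl] = d_jk e_il + d_li e_kj   (anticommutator). *)

(* Data of a q(n)-module structure on a super vector space V (possibly
   infinite dimensional): the parity involution [qpar] (V_0 = +1 eigenspace,
   V_1 = -1 eigenspace) and the actions of the basis elements e_ij, f_ij. *)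
Record qmod (F : fieldType) (n : nat) (V : lmodType F) := QMod {
  qpar : V -> V;
  qe : 'I_n -> 'I_n -> V -> V;
  qf : 'I_n -> 'I_n -> V -> V }.

Definition lin_map (F : fieldType) (V : lmodType F) (g : V -> V) :=
  forall (a : F) (u v : V), g (a *: u + v) = a *: g u + g v.

Record is_qmod (F : fieldType) (n : nat) (V : lmodType F) (M : qmod n V) : Prop := {
  qpar_lin : lin_map (qpar M);
  qe_lin : forall i j, lin_map (qe M i j);
  qf_lin : forall i j, lin_map (qf M i j);
  qpar_invol : forall v, qpar M (qpar M v) = v;
  qe_even : forall i j v, qe M i j (qpar M v) = qpar M (qe M i j v);
  qf_odd : forall i j v, qf M i j (qpar M v) = - qpar M (qf M i j v);
  br_ee : forall i j k l v,
    qe M i j (qe M k l v) - qe M k l (qe M i j v)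
    = (j == k)%:R *: qe M i l v - (l == i)%:R *: qe M k j v;
  br_ef : forall i j k l v,
    qe M i j (qf M k l v) - qf M k l (qe M i j v)
    = (j == k)%:R *: qf M i l v - (l == i)%:R *: qf M k j v;
  br_ff : forall i j k l v,
    qf M i j (qf M k l v) + qf M k l (qf M i j v)
    = (j == k)%:R *: qe M i l v + (l == i)%:R *: qe M k j v }.

Definition is_qsubmod (F : fieldType) (n : nat) (V : lmodType F) (M : qmod n V)
  (S : V -> Prop) : Prop :=
  [/\ S 0, (forall a u v, S u -> S v -> S (a *: u + v)),
      (forall v, S v -> S (qpar M v)),
      (forall i j v, S v -> S (qe M i j v)) &
      (forall i j v, S v -> S (qf M i j v))].

Definition qmod_simple (F : fieldType) (n : nat) (V : lmodType F) (M : qmod n V) :=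
  (exists v : V, v != 0) /\
  forall S, is_qsubmod M S -> (forall v, S v -> v = 0) \/ (forall v, S v).

(* weights are elements of h_0^* = F^n, mu <-> sum_i mu_i delta_i *)
Definition integral_weight (F : fieldType) (n : nat) (lam : 'I_n -> F) :=
  forall i, exists k : int, lam i = k%:~R.

(* highest weight vector for the standard Borel subalgebra:
   weight lam for h_0 and annihilated by n^+ = span{e_ij, f_ij | i < j} *)
Definition hw_vector (F : fieldType) (n : nat) (V : lmodType F) (M : qmod n V)
  (lam : 'I_n -> F) (v : V) :=
  [/\ v != 0, (forall i, qe M i i v = lam i *: v) &
      (forall i j : 'I_n, (i < j)%N -> qe M i j v = 0 /\ qf M i j v = 0)].

(* M_{mu, p}: vectors of weight mu and parity p (false = even, true = odd) *)
Definition weight_space_par (F : fieldType) (n : nat) (V : lmodType F) (M : qmod n V)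
  (mu : 'I_n -> F) (p : bool) (v : V) : Prop :=
  (forall i, qe M i i v = mu i *: v) /\ qpar M v = (if p then - v else v).

Definition has_dim (F : fieldType) (V : lmodType F) (S : V -> Prop) (d : nat) :=
  exists b : 'I_d -> V,
    [/\ forall i, S (b i),
        (forall c : 'I_d -> F, \sum_i c i *: b i = 0 -> forall i, c i = 0) &
        (forall v, S v -> exists c : 'I_d -> F, v = \sum_i c i *: b i)].

(* Main.v *)
Require Import Defs.
From HB Require Import structures.
From mathcomp Require Import all_boot all_order all_algebra.
From Stdlib Require Import Classical.
From Stdlib Require List.
Set Implicit Arguments. Unset Strict Implicit. Unset Printing Implicit Defensive.
Import Order.TTheory GRing.Theory Num.Theory.
Local Open Scope ring_scope.

Section Lin.
Variables (F : fieldType) (V : lmodType F) (g : V -> V) (hg : lin_map g).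
Lemma lin0 : g 0 = 0.
Proof.
have h := hg 1 0 0; rewrite scaler0 add0r scale1r in h.
have: g 0 + g 0 - g 0 = g 0 - g 0 by rewrite -h.
by rewrite addrK subrr.
Qed.
Lemma linD u w : g (u + w) = g u + g w.
Proof. by have := hg 1 u w; rewrite !scale1r. Qed.
Lemma linZ a u : g (a *: u) = a *: g u.
Proof. by have := hg a u 0; rewrite !addr0 lin0 addr0. Qed.
Lemma linN u : g (- u) = - g u.
Proof. by rewrite -scaleN1r linZ scaleN1r. Qed.
Lemma linB u w : g (u - w) = g u - g w.
Proof. by rewrite linD linN. Qed.
Lemma lin_sum (I : Type) (r : seq I) (P : pred I) (f : I -> V) :
  g (\sum_(i <- r | P i) f i) = \sum_(i <- r | P i) g (f i).
Proof. exact: (big_morph g linD lin0). Qed.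
End Lin.

Section Span.
Variables (F : fieldType) (V : lmodType F).

Definition inspan (ws : seq V) (x : V) :=
  exists c : 'I_(size ws) -> F, x = \sum_(i < size ws) c i *: nth 0 ws i.

Lemma inspan0 ws : inspan ws 0.
Proof. by exists (fun _ => 0); rewrite big1 // => i _; rewrite scale0r. Qed.

Lemma inspan_comb ws a x y : inspan ws x -> inspan ws y -> inspan ws (a *: x + y).
Proof.
move=> [c ->] [e ->]; exists (fun i => a * c i + e i).
rewrite scaler_sumr -big_split; apply: eq_bigr => i _.
by rewrite scalerDl scalerA.
Qed.

Lemma inspan_mem ws w : w \in ws -> inspan ws w.
Proof.
move=> hw; have hi : (index w ws < size ws)%N by rewrite index_mem.
exists (fun i => (val i == index w ws)%:R).
rewrite (bigD1 (Ordinal hi)) //= eqxx scale1r nth_index // big1 ?addr0 //.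
move=> i hi'; rewrite (_ : (val i == _) = false) ?scale0r //.
apply/negbTE; move: hi'; apply: contra => /eqP e; apply/eqP/val_inj.
by rewrite /= e.
Qed.

Lemma inspan_sum ws d (c : 'I_d -> F) (f : 'I_d -> V) :
  (forall j, inspan ws (f j)) -> inspan ws (\sum_(j < d) c j *: f j).
Proof.
move=> hf; apply: big_ind; first exact: inspan0.
  by move=> x y hx hy; rewrite -[x]scale1r; apply: inspan_comb.
by move=> j _; rewrite -[_ *: _]addr0; apply: inspan_comb (inspan0 _).
Qed.

Lemma findim (ws : seq V) (S : V -> Prop) : S 0 ->
  (forall a u w, S u -> S w -> S (a *: u + w)) ->
  (forall x, S x -> inspan ws x) -> exists d, has_dim S d.
Proof.
elim: ws S => [|w ws IH] S h0 hc hs.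
  exists 0%N, (fun _ => 0); split; first by case.
    by move=> c _ [].
  by move=> x /hs [c ->]; exists (fun _ => 0); rewrite !big_ord0.
case: (classic (exists s, S s /\ ~ inspan ws s)) => [[s [Ss ns]] | hno]; last first.
  apply: IH h0 hc _ => x Sx; apply: NNPP => nx; apply: hno; exists x.
  by split.
pose S' x := S x /\ inspan ws x.
have [d [b [hb hind hspan]]] : exists d, has_dim S' d.
  apply: IH; first by split => //; exact: inspan0.
    by move=> a u y [h1 h2] [h3 h4]; split; [apply: hc | apply: inspan_comb].
  by move=> x [].
have lw : forall j : 'I_d, lift ord_max j = widen_ord (leqnSn d) j.
  by move=> j; apply: val_inj; exact: lift_max.
pose b' (i : 'I_d.+1) := if unlift ord_max i is Some j then b j else s.
have b'w : forall j, b' (widen_ord (leqnSn d) j) = b j.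
  by move=> j; rewrite /b' -lw liftK.
have b'm : b' ord_max = s by rewrite /b' unlift_none.
have sumS : forall c : 'I_d.+1 -> F, \sum_(i < d.+1) c i *: b' i =
    \sum_(j < d) c (widen_ord (leqnSn d) j) *: b j + c ord_max *: s.
  by move=> c; rewrite big_ord_recr /= b'm; congr (_ + _); apply: eq_bigr => j _; rewrite b'w.
exists d.+1, b'; split.
- by move=> i; rewrite /b'; case: unlift => [j|] //; case: (hb j).
- move=> c; rewrite sumS => e0.
  have cmax : c ord_max = 0.
    apply: NNPP => /eqP nz; apply: ns.
    have -> : s = (- (c ord_max)^-1) *: \sum_(j < d) c (widen_ord (leqnSn d) j) *: b j.
      have eS : \sum_(j < d) c (widen_ord (leqnSn d) j) *: b j = - (c ord_max *: s).
        by apply/eqP; rewrite -addr_eq0 e0.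
      by rewrite eS scaleNr scalerN opprK scalerA mulVf // scale1r.
    rewrite -[_ *: _]addr0; apply: inspan_comb; last exact: inspan0.
    by apply: inspan_sum => j; case: (hb j).
  move: e0; rewrite cmax scale0r addr0 => e0.
  move=> i; case: (unliftP ord_max i) => [j ->|->] //.
  by rewrite lw; exact: (hind (fun j => c (widen_ord (leqnSn d) j)) e0 j).
- move=> x Sx.
  have [c ex] := hs x Sx; have [a ea] := hs s Ss.
  rewrite /= big_ord_recl /= in ex; rewrite /= big_ord_recl /= in ea.
  have a0 : a ord0 != 0.
    apply/negP => /eqP a0; apply: ns; rewrite ea a0 scale0r add0r.
    by exists (fun i => a (lift ord0 i)); apply: eq_bigr => i _.
  pose k := c ord0 / a ord0.
  have hy : S' (- k *: s + x).
    split; first by apply: hc.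
    exists (fun i => c (lift ord0 i) - k * a (lift ord0 i)).
    rewrite ex ea scalerDr scalerA mulNr divfK // scaleNr.
    rewrite addrC addrACA subrr add0r scaleNr scaler_sumr -sumrB.
    by apply: eq_bigr => i _; rewrite add0n scalerA scalerBl.
  have [e ee] := hspan _ hy.
  exists (fun i => if unlift ord_max i is Some j then e j else k).
  rewrite big_ord_recr /= unlift_none.
  have -> : \sum_(i < d) (if unlift ord_max (widen_ord (leqnSn d) i) is Some j then e j else k) *: b' (widen_ord (leqnSn d) i) = \sum_(i < d) e i *: b i.
    by apply: eq_bigr => i _; rewrite b'w -lw liftK.
  by rewrite -ee b'm addrAC scaleNr addNr add0r.
Qed.

Lemma has_dim0 (S : V -> Prop) : (forall x, S x -> x = 0) -> has_dim S 0.
Proof.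
move=> h; exists (fun _ => 0); split; first by case.
  by move=> c _ [].
by move=> x /h ->; exists (fun _ => 0); rewrite big_ord0.
Qed.

End Span.

Fixpoint words (T : finType) (k : nat) : seq (seq T) :=
  if k is k'.+1 then [::] :: [seq a :: w | a <- enum T, w <- words T k']
  else [:: [::]].

Lemma words_mem (T : finType) k (w : seq T) : (size w <= k)%N -> w \in words T k.
Proof.
elim: k w => [|k IH] [|a w] //=; rewrite ?inE ?eqxx //.
move=> hw; apply/orP; right.
by apply: (allpairs_f (fun a w => a :: w)); [rewrite mem_enum | apply: IH].
Qed.

Lemma natf_inj (F : fieldType) : [pchar F] =i pred0 ->
  forall m k : nat, (m%:R : F) = k%:R -> m = k.
Proof.
move=> hF; have c0 := (pcharf0P F).1 hF.
move=> m k e; case: (leqP m k) => h.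
  have : (k - m)%:R == 0 :> F by rewrite natrB // e subrr.
  by rewrite c0 subn_eq0 => hkm; apply/eqP; rewrite eqn_leq h hkm.
have : (m - k)%:R == 0 :> F by rewrite natrB ?(ltnW h) // e subrr.
by rewrite c0 subn_eq0 => hkm; apply/eqP; rewrite eqn_leq hkm (ltnW h).
Qed.

Section Main.
Variables (F : fieldType) (hF : [pchar F] =i pred0) (n : nat) (V : lmodType F)
  (M : qmod n V) (hM : is_qmod M).

Definition letter := ('I_n * 'I_n * bool)%type.
Definition act (l : letter) : V -> V :=
  if l.2 then qf M l.1.1 l.1.2 else qe M l.1.1 l.1.2.

Lemma act_lin l : lin_map (act l).
Proof. by rewrite /act; case: l.2; [apply: qf_lin | apply: qe_lin]. Qed.

Lemma subr_eqE (A B C : V) : A - B = C -> A = B + C.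
Proof. by move=> <-; rewrite addrC addrNK. Qed.
Lemma subr_eqE' (A B C : V) : B - A = C -> A = B - C.
Proof. by move=> <-; rewrite opprB addrC addrNK. Qed.

Lemma act_comm i j b1 k q b2 x :
  act (i, j, b1) (act (k, q, b2) x) =
  (if b1 && b2 then -1 else 1) *: act (k, q, b2) (act (i, j, b1) x) + (j == k)%:R *: act (i, q, b1 (+) b2) x
  + ((if b1 && b2 then 1 else -1) * (q == i)%:R) *: act (k, j, b1 (+) b2) x.
Proof.
rewrite /act /=; case: b1; case: b2 => /=.
- rewrite mul1r scaleN1r -addrA -(br_ff hM).
  by rewrite addrC addrK.
- rewrite mulN1r scale1r scaleNr.
  move/subr_eqE': (br_ef hM k q i j x) => ->.
  by rewrite opprB addrA.
- rewrite mulN1r scale1r scaleNr.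
  by move/subr_eqE: (br_ef hM i j k q x) => ->; rewrite addrA.
- rewrite mulN1r scale1r scaleNr.
  by move/subr_eqE: (br_ee hM i j k q x) => ->; rewrite addrA.
Qed.

Definition isw (nu : 'I_n -> F) (y : V) := forall k, qe M k k y = nu k *: y.
Definition shift (nu : 'I_n -> F) (i j : 'I_n) :=
  fun k => nu k + (k == i)%:R - (k == j)%:R.

Lemma isw_ext nu nu' y : (forall k, nu k = nu' k) -> isw nu y -> isw nu' y.
Proof. by move=> e h k; rewrite h e. Qed.

Lemma act_wt nu y i j b : isw nu y -> isw (shift nu i j) (act (i, j, b) y).
Proof.
move=> hy k; have := act_comm k k false i j b y; rewrite /= => h.
rewrite [act (k, k, false) _]/act /= in h; rewrite h.
have -> : act (k, k, false) y = nu k *: y by rewrite /act /= hy.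
rewrite (linZ (act_lin _)) mulN1r scaleNr scale1r.
have -> : (k == i)%:R *: act (k, j, b) y = (k == i)%:R *: act (i, j, b) y.
  by case: eqP => [->|]; rewrite ?scale0r.
have -> : (j == k)%:R *: act (i, k, b) y = (j == k)%:R *: act (i, j, b) y.
  by case: eqP => [->|]; rewrite ?scale0r.
rewrite /shift (eq_sym j k) scalerBl scalerDl.
by rewrite ?addrA.
Qed.

Lemma isw_lin nu : forall a u w, isw nu u -> isw nu w -> isw nu (a *: u + w).
Proof.
move=> a u w hu hw k; rewrite (qe_lin hM) hu hw.
by rewrite scalerDr !scalerA mulrC.
Qed.

Lemma isw0 nu : isw nu 0.
Proof. by move=> k; rewrite lin0 ?scaler0 //; apply: (qe_lin hM). Qed.

Lemma par_act l y : qpar M (act l y) = (if l.2 then -1 else 1) *: act l (qpar M y).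
Proof.
rewrite /act; case: l.2; last by rewrite scale1r (qe_even hM).
by rewrite (qf_odd hM) scaleN1r opprK.
Qed.

Lemma ff_diag a y : qf M a a (qf M a a y) = qe M a a y.
Proof.
have h := br_ff hM a a a a y; rewrite eqxx scale1r in h.
have n2 : (2%:R : F) != 0 by move/pcharf0P: hF => ->.
apply: (scalerI n2); by rewrite !scaler_nat !mulr2n.
Qed.

Lemma ff_anti a j y : a != j -> qf M j j (qf M a a y) = - qf M a a (qf M j j y).
Proof.
move=> naj; have h := br_ff hM j j a a y.
rewrite [j == a]eq_sym (negbTE naj) !scale0r addr0 in h.
by apply/eqP; rewrite -subr_eq0 opprK h.
Qed.


Lemma iswZ nu a u : isw nu u -> isw nu (a *: u).
Proof. by move=> h; rewrite -[_ *: _]addr0; apply: isw_lin h (isw0 nu). Qed.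

Lemma In_map (A B : Type) (f : A -> B) (s : seq A) y :
  List.In y (map f s) -> exists x, y = f x /\ List.In x s.
Proof.
elim: s => [|a s IH] //= [<-|/IH [x [-> hx]]]; first by exists a; split; [|left].
by exists x; split; [|right].
Qed.

Lemma In_filter (A : Type) (p : pred A) (s : seq A) y :
  List.In y (filter p s) -> p y /\ List.In y s.
Proof.
elim: s => [|a s IH] //=; case: ifP => pa /=.
  by move=> [<-|/IH [h1 h2]]; split => //; [left|right].
by move/IH => [h1 h2]; split => //; right.
Qed.

Lemma indep_head (R : seq (('I_n -> F) * V)) nu0 y0 :
  isw nu0 y0 ->
  (forall q, List.In q R -> isw q.1 q.2 /\ exists k, q.1 k != nu0 k) ->
  y0 + \sum_(q <- R) q.2 = 0 -> y0 = 0.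
Proof.
have [N] := ubnP (size R); elim: N R y0 => // N IH [|q R] y0 /= hsz hy0 hR.
  by rewrite big_nil addr0.
have [hq [k hk]] := hR q (or_introl erefl).
pose h := fun z => qe M k k z - q.1 k *: z.
have hlin : lin_map h.
  move=> a u w; rewrite /h (qe_lin hM) scalerDr !scalerA mulrC -scalerA.
  by rewrite scalerBr opprD !addrA; congr (_ + _); rewrite addrAC.
have eR : forall R', (forall r, List.In r R' -> isw r.1 r.2) ->
    \sum_(r <- R') h r.2 = \sum_(r <- R') (r.1 k - q.1 k) *: r.2.
  elim => [|r R' IHR] hR'; rewrite ?big_nil // !big_cons IHR; last first.
    by move=> r' hr'; apply: hR'; right.
  by rewrite /h (hR' r (or_introl erefl)) scalerBl.
move=> e; have := congr1 h e.
rewrite (lin0 hlin) (linD hlin) big_cons (linD hlin) (lin_sum hlin).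
have -> : h q.2 = 0 by rewrite /h hq subrr.
rewrite add0r eR; last by move=> r hr; case: (hR r (or_intror hr)).
have -> : h y0 = (nu0 k - q.1 k) *: y0 by rewrite /h hy0 scalerBl.
have := IH [seq (r.1, (r.1 k - q.1 k) *: r.2) | r <- R] ((nu0 k - q.1 k) *: y0).
rewrite size_map big_map /=; move=> H1 H2.
have := H1 hsz (iswZ _ hy0).
have H3 : (forall q0, List.In q0 [seq (r.1, (r.1 k - q.1 k) *: r.2) | r <- R] ->
       isw q0.1 q0.2 /\ (exists k0 : 'I_n, q0.1 k0 != nu0 k0)).
  move=> q0 hq0; have [r [eq0 hr]] := In_map hq0; subst q0 => /=.
  by have [h1 h2] := hR r (or_intror hr); split => //; apply: iswZ.
move/(_ H3 H2)/eqP; rewrite scaler_eq0 => /orP [|/eqP //].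
by rewrite subr_eq0 eq_sym (negbTE hk).
Qed.

Section HW.
Variables (lam : 'I_n -> F) (v : V) (eps : bool) (hv0 : v != 0) (hvw : isw lam v)
  (hvr : forall i j : 'I_n, (i < j)%N -> qe M i j v = 0 /\ qf M i j v = 0)
  (hvp : qpar M v = (if eps then - v else v)).

Definition g (s : seq 'I_n) := foldr (fun i x => qf M i i x) v s.
Definition ltI : rel 'I_n := fun x y => (x < y)%N.

Lemma g_wt s : isw lam (g s).
Proof.
elim: s => [|a t IH] //=.
apply: isw_ext (act_wt a a true IH) => k.
by rewrite /shift addrK.
Qed.

Lemma g_raise s (i j : 'I_n) b : (i < j)%N -> act (i, j, b) (g s) = 0.
Proof.
elim: s i j b => [|a t IH] i j b hij.
  by rewrite /act; case: b => /=; case: (hvr hij).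
change (act (i, j, b) (act (a, a, true) (g t)) = 0).
rewrite act_comm (IH i j b hij) (lin0 (act_lin _)) scaler0 add0r.
have -> : (j == a)%:R *: act (i, a, b (+) true) (g t) = 0.
  by case: eqP => [<-|_]; [rewrite (IH i j _ hij) scaler0 | rewrite scale0r].
set c := (if _ then _ else _).
have -> : (c * (a == i)%:R) *: act (a, j, b (+) true) (g t) = 0.
  by case: eqP => [->|_]; [rewrite (IH i j _ hij) scaler0 | rewrite mulr0 scale0r].
by rewrite addr0.
Qed.

Lemma g_par s : exists c : F, qpar M (g s) = c *: g s.
Proof.
elim: s => [|a t [c IH]].
  exists (if eps then -1 else 1); rewrite /= hvp; case: eps; by rewrite ?scaleN1r ?scale1r.
exists ((-1) * c).
change (qpar M (act (a, a, true) (g t)) = ((-1) * c) *: act (a, a, true) (g t)).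
by rewrite par_act /= IH (linZ (act_lin _)) scalerA.
Qed.

Lemma g_sort s j : sorted ltI s -> exists c s',
  [/\ sorted ltI s', {subset s' <= j :: s} & qf M j j (g s) = c *: g s'].
Proof.
elim: s => [|a t IH] hs.
  by exists 1, [:: j]; split => //; rewrite scale1r.
have ltr : transitive ltI by move=> x y z; apply: ltn_trans.
move: (hs); rewrite /= path_sortedE // => /andP [hall ht].
case: (ltngtP j a) => hja.
- exists 1, [:: j, a & t]; split => //; last by rewrite scale1r.
  by rewrite /=; apply/andP; split.
- have [c [t' [ht' hsub heq]]] := IH ht.
  exists (- c), (a :: t'); split.
  + rewrite /= path_sortedE // ht' andbT; apply/allP => x /hsub.
    rewrite inE => /orP [/eqP -> //| xt].
    exact: (allP hall).
  + move=> x; rewrite !inE => /orP [-> | /hsub]; first by rewrite orbT.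
    by rewrite inE => /orP [->|->]; rewrite ?orbT.
  + rewrite /= ff_anti; last by apply/eqP => eaj; rewrite eaj ltnn in hja.
    by rewrite heq (linZ (qf_lin hM _ _)) scaleNr.
- have eja : j = a by apply: val_inj.
  subst; exists (lam a), t; split => //.
    by move=> x xt; rewrite !inE xt !orbT.
  by rewrite /= ff_diag (g_wt t).
Qed.


Definition mono := (seq letter * seq 'I_n)%type.
Definition mon (p : mono) := foldr act (g p.2) p.1.
Definition low (l : letter) := (l.1.2 < l.1.1)%N.
Definition okm (p : mono) := all low p.1 && sorted ltI p.2.
Definition U (x : V) := exists L : seq (F * mono),
  all (fun q => okm q.2) L /\ x = \sum_(q <- L) q.1 *: mon q.2.

Lemma U0 : U 0.
Proof. by exists [::]; rewrite big_nil. Qed.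

Lemma Ucomb a x y : U x -> U y -> U (a *: x + y).
Proof.
move=> [L1 [h1 ->]] [L2 [h2 ->]].
exists ([seq (a * q.1, q.2) | q <- L1] ++ L2); split.
  by rewrite all_cat h2 andbT all_map; exact: h1.
rewrite big_cat big_map /= scaler_sumr; congr (_ + _).
by apply: eq_bigr => q _; rewrite scalerA.
Qed.

Lemma Uscale a x : U x -> U (a *: x).
Proof. by move=> h; rewrite -[_ *: _]addr0; apply: Ucomb h U0. Qed.

Lemma Uadd x y : U x -> U y -> U (x + y).
Proof. by move=> hx hy; rewrite -[x]scale1r; apply: Ucomb. Qed.

Lemma Umon p : okm p -> U (mon p).
Proof. by move=> hp; exists [:: (1, p)]; rewrite /= hp big_seq1 scale1r. Qed.

Lemma U_low l x : low l -> U x -> U (act l x).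
Proof.
move=> hl [L [hL ->]].
exists [seq (q.1, (l :: q.2.1, q.2.2)) | q <- L]; split.
  rewrite all_map; apply/allP => q qL /=.
  by rewrite /okm /= hl /=; exact: (allP hL q qL).
rewrite (lin_sum (act_lin l)) big_map; apply: eq_bigr => q _.
by rewrite (linZ (act_lin l)).
Qed.

Lemma U_act_mon p : okm p -> forall m, U (act m (mon p)).
Proof.
case: p => ys s; elim: ys => [|l ys IH]; rewrite /okm /=.
  move=> hs [[i j] b]; rewrite /mon /=.
  case: (ltngtP i j) => hij.
  - by rewrite g_raise //; exact: U0.
  - by apply: U_low => //; apply: (Umon (p := ([::], s))); rewrite /okm /= hs.
  - have eij : i = j by apply: val_inj.
    subst; case: b.
    + rewrite /act /=; have [c [s' [hs' _ ->]]] := g_sort j hs.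
      by apply: Uscale; apply: (Umon (p := ([::], s'))); rewrite /okm /= hs'.
    + rewrite /act /= (g_wt s); apply: Uscale.
      by apply: (Umon (p := ([::], s))); rewrite /okm /= hs.
move=> /andP [/andP [hl hys] hs] [[i j] b].
have IH' := IH (introT andP (conj hys hs)).
move: hl; case: l => [[k q] b2] hl.
rewrite /mon /= act_comm.
apply: Uadd; [apply: Uadd|]; apply: Uscale; last exact: IH'.
  by apply: U_low => //; exact: IH'.
exact: IH'.
Qed.

Lemma U_act m x : U x -> U (act m x).
Proof.
move=> [L [hL ->]]; rewrite (lin_sum (act_lin m)).
elim: L hL => [|q L IH] /=; first by move=> _; rewrite big_nil; exact: U0.
move=> /andP [hq hL]; rewrite big_cons (linZ (act_lin m)).
by apply: Uadd; [apply: Uscale; apply: U_act_mon | apply: IH].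
Qed.

Lemma mon_par p : exists c : F, qpar M (mon p) = c *: mon p.
Proof.
case: p => ys s; elim: ys => [|l ys [c IH]]; first exact: g_par.
exists ((if l.2 then -1 else 1) * c).
by rewrite /mon /= par_act; rewrite /mon /= in IH; rewrite IH (linZ (act_lin _)) scalerA.
Qed.

Lemma U_par x : U x -> U (qpar M x).
Proof.
move=> [L [hL ->]]; rewrite (lin_sum (qpar_lin hM)).
elim: L hL => [|q L IH] /=; first by move=> _; rewrite big_nil; exact: U0.
move=> /andP [hq hL]; rewrite big_cons (linZ (qpar_lin hM)).
have [c ->] := mon_par q.2.
by apply: Uadd; [rewrite scalerA; apply: Uscale; apply: Umon | apply: IH].
Qed.

Lemma U_sub : is_qsubmod M U.
Proof.
split; [exact: U0 | exact: Ucomb | exact: U_par | |].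
- by move=> i j x hx; exact: (U_act (i, j, false) hx).
- by move=> i j x hx; exact: (U_act (i, j, true) hx).
Qed.

Lemma U_all : qmod_simple M -> forall x, U x.
Proof.
move=> [_ hs]; case: (hs _ U_sub) => // h.
have : U v by apply: (Umon (p := ([::], [::]))).
by move/h => e; move: hv0; rewrite e eqxx.
Qed.

Definition wt (ys : seq letter) := foldr (fun l nu => shift nu l.1.1 l.1.2) lam ys.

Lemma mon_wt p : isw (wt p.1) (mon p).
Proof.
case: p => ys s; elim: ys => [|[[i j] b] ys IH]; first exact: g_wt.
exact: act_wt.
Qed.


Definition eqw (nu mu : 'I_n -> F) := [forall k, nu k == mu k].

Lemma proj (L : seq (F * mono)) mu x : isw mu x ->
  x = \sum_(q <- L) q.1 *: mon q.2 ->
  x = \sum_(q <- L | eqw (wt q.2.1) mu) q.1 *: mon q.2.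
Proof.
move=> hx ex.
set A := \sum_(q <- L | _) _.
have hA : isw mu A.
  rewrite /A; apply: big_ind => //; first exact: isw0.
    by move=> a b ha hb; rewrite -[a]scale1r; apply: isw_lin.
  move=> q /forallP he; apply: iswZ; apply: isw_ext (mon_wt q.2) => k.
  exact/eqP/he.
have e0 := indep_head (R := [seq (wt q.2.1, q.1 *: mon q.2) | q <- L & ~~ eqw (wt q.2.1) mu]) (nu0 := mu) (y0 := A - x).
have : A - x = 0.
  apply: e0.
  - by rewrite -scaleN1r addrC; apply: isw_lin hx hA.
  - move=> r hr; have [q [eq0 hq]] := In_map hr; subst r.
    have [hne _] := In_filter hq; split => /=.
      by apply: iswZ; apply: mon_wt.
    by move: hne; rewrite /eqw negb_forall => /existsP [k hk]; exists k.
  - rewrite big_map big_filter /= ex (bigID (fun q => eqw (wt q.2.1) mu)) /=.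
    by rewrite opprD addrA subrr add0r addNr.
by move/eqP; rewrite subr_eq0 => /eqP ->.
Qed.

Definition phi (nu : 'I_n -> F) := \sum_k (val k)%:R * nu k.

Lemma phi_shift nu i j : phi (shift nu i j) = phi nu + (val i)%:R - (val j)%:R.
Proof.
have hd : forall i : 'I_n, \sum_k (val k)%:R * (k == i)%:R = (val i)%:R :> F.
  move=> i0; rewrite (bigD1 i0) //= eqxx mulr1 big1 ?addr0 // => k /negbTE ->.
  by rewrite mulr0.
rewrite /phi -(hd i) -(hd j) -big_split /= -sumrB; apply: eq_bigr => k _.
by rewrite /shift mulrBr mulrDr.
Qed.

Lemma phi_wt ys : all low ys -> exists K, (size ys <= K)%N /\ phi (wt ys) = phi lam + K%:R.
Proof.
elim: ys => [|[[i j] b] ys IH] /=; first by exists 0%N; rewrite addr0.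
move/andP => [hl hys]; have [K [hK e]] := IH hys.
rewrite /low /= in hl.
exists (K + (i - j))%N; split.
  by rewrite -addn1 leq_add // subn_gt0.
rewrite phi_shift.
by rewrite e natrD natrB ?(ltnW hl) // !addrA.
Qed.

Lemma wt_int ys k : exists a b : nat, wt ys k = lam k + a%:R - b%:R.
Proof.
elim: ys => [|[[i j] c] ys [a [b e]]]; first by exists 0%N, 0%N; rewrite addr0 subr0.
exists (a + (k == i))%N, (b + (k == j))%N.
have -> : wt ((i, j, c) :: ys) k = shift (wt ys) i j k by [].
rewrite /shift e !natrD.
by rewrite opprD !addrA; congr (_ - _); rewrite addrAC.
Qed.

Lemma f_wt nu a y : isw nu y -> isw nu (qf M a a y).
Proof.
move=> h; apply: isw_ext (act_wt a a true h) => k.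
by rewrite /shift addrK.
Qed.

Lemma par_f a y : qpar M (qf M a a y) = - qf M a a (qpar M y).
Proof. by have := par_act (a, a, true) y; rewrite /= scaleN1r. Qed.

Local Notation wsp := (weight_space_par M).

Lemma main_hw (hs : qmod_simple M) i0 (hi0 : ~ exists z : int, lam i0 = z%:~R) mu :
  exists d, has_dim (wsp mu false) d /\ has_dim (wsp mu true) d.
Proof.
have Uall := U_all hs.
have decomp : forall p x, wsp mu p x -> exists L : seq (F * mono),
    all (fun q => okm q.2) L /\ x = \sum_(q <- L | eqw (wt q.2.1) mu) q.1 *: mon q.2.
  move=> p x [hx _]; have [L [hL ex]] := Uall x; exists L; split => //.
  exact: proj hx ex.
have wsp_comb : forall p a u w, wsp mu p u -> wsp mu p w -> wsp mu p (a *: u + w).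
  move=> p a u w [h1 h2] [h3 h4]; split; first exact: isw_lin.
  rewrite (qpar_lin hM) h2 h4; clear h2 h4; case: p => //; by rewrite scalerN opprD.
have wsp0 : forall p, wsp mu p 0.
  move=> p; split; first exact: isw0.
  by rewrite (lin0 (qpar_lin hM)); case: p; rewrite ?oppr0.
case: (eqVneq (mu i0) 0) => hmu.
  have z : forall p x, wsp mu p x -> x = 0.
    move=> p x /decomp [L [hL ->]]; apply: big1 => q /forallP /(_ i0) /eqP e.
    exfalso; have [a [b ew]] := wt_int q.2.1 i0.
    apply: hi0; exists (b%:Z - a%:Z); rewrite intrB /= -!pmulrn.
    have : lam i0 + a%:R - b%:R = 0 by rewrite -ew e hmu.
    by move/eqP; rewrite -addrA addr_eq0 opprB => /eqP.
  by exists 0%N; split; apply: has_dim0; apply: z.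
have [ws hws] : exists ws, forall x, wsp mu false x -> inspan ws x.
  case: (classic (exists K : nat, K%:R = phi mu - phi lam)) => [[K hK]|hno].
    exists [seq mon (ys, s) | ys <- words letter K, s <- words 'I_n n].
    move=> x /decomp [L [hL ->]]; rewrite big_seq_cond; apply: big_ind.
    - exact: inspan0.
    - by move=> x1 x2 h1 h2; rewrite -[x1]scale1r; apply: inspan_comb.
    move=> [c [ys s]] /andP [qL /forallP he] /=.
    have /andP [hys hs'] := allP hL _ qL.
    rewrite -[_ *: _]addr0; apply: inspan_comb (inspan0 _); apply: inspan_mem.
    apply: (allpairs_f (fun ys s => mon (ys, s))); apply: words_mem.
      have [K' [hK' e]] := phi_wt hys.
      have ep : phi (wt ys) = phi mu by apply: eq_bigr => k _; rewrite (eqP (he k)).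
      suff -> : K = K' by [].
      apply: (natf_inj hF); rewrite hK -ep e.
      by rewrite addrC addKr.
    have ltr : transitive ltI by move=> x1 y1 z1; apply: ltn_trans.
    have lti : irreflexive ltI by move=> x1; apply: ltnn.
    apply: leq_trans (uniq_leq_size (s2 := enum 'I_n) (sorted_uniq ltr lti hs') _) _; last by rewrite size_enum_ord.
    by move=> y1 _; rewrite mem_enum.
  exists [::] => x /decomp [L [hL ->]]; rewrite big_seq_cond big1; first exact: inspan0.
  move=> [c [ys s]] /andP [qL /forallP he]; exfalso; apply: hno.
  have /andP [hys _] := allP hL _ qL.
  have [K' [_ e]] := phi_wt hys.
  have ep : phi (wt ys) = phi mu by apply: eq_bigr => k _; rewrite (eqP (he k)).
  by exists K'; rewrite -ep e addrC addKr.
have [d [b [hb hind hsp]]] := findim (wsp0 false) (wsp_comb false) hws.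
exists d; split; first by exists b.
have hqf := qf_lin hM i0 i0.
exists (fun j => qf M i0 i0 (b j)); split.
- move=> j; have [h1 h2] := hb j; split; first exact: f_wt.
  by rewrite par_f h2.
- move=> c e0.
  have hS : wsp mu false (\sum_j c j *: b j).
    apply: big_ind; [exact: wsp0 | | ].
      by move=> x1 x2 h1 h2; rewrite -[x1]scale1r; apply: wsp_comb.
    by move=> j _; rewrite -[_ *: _]addr0; apply: wsp_comb (wsp0 _); apply: hb.
  have e1 : qf M i0 i0 (\sum_j c j *: b j) = 0.
    by rewrite (lin_sum hqf) -[RHS]e0; apply: eq_bigr => j _; rewrite (linZ hqf).
  have e2 : mu i0 *: \sum_j c j *: b j = 0.
    by case: hS => h1 _; rewrite -h1 -ff_diag e1 (lin0 hqf).
  apply: hind; move/eqP: e2; rewrite scaler_eq0 (negbTE hmu) /=.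
  by move/eqP.
- move=> u [hu pu].
  have hfu : wsp mu false (qf M i0 i0 u).
    split; first exact: f_wt.
    by rewrite par_f pu (linN hqf) opprK.
  have [c ec] := hsp _ hfu.
  exists (fun j => (mu i0)^-1 * c j).
  have : qf M i0 i0 (qf M i0 i0 u) = mu i0 *: u by rewrite ff_diag hu.
  rewrite ec (lin_sum hqf) => e.
  apply: (scalerI hmu); rewrite -e scaler_sumr; apply: eq_bigr => j _.
  by rewrite (linZ hqf) scalerA mulrA mulfV // mul1r.
Qed.

End HW.
End Main.

Theorem corollary3p3 (F : closedFieldType) (hF : [pchar F] =i pred0)
  (n : nat) (V : lmodType F) (M : qmod n V) (hM : is_qmod M)
  (hsimple : qmod_simple M) (lam : 'I_n -> F)
  (hlam : ~ integral_weight lam) (hhw : exists v, hw_vector M lam v) :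
  forall mu : 'I_n -> F, exists d : nat,
    has_dim (weight_space_par M mu false) d /\
    has_dim (weight_space_par M mu true) d.
Proof.
move=> mu.
have [i0 hi0] : exists i0, ~ exists z : int, lam i0 = z%:~R.
  apply: NNPP => h; apply: hlam => i; apply: NNPP => h'; apply: h; by exists i.
have [v [hv0 hvw hvr]] := hhw.
have hqp := qpar_lin hM.
pose P y := isw M lam y /\
  (forall i j : 'I_n, (i < j)%N -> qe M i j y = 0 /\ qf M i j y = 0).
have Pc : forall a u w, P u -> P w -> P (a *: u + w).
  move=> a u w [h1 h2] [h3 h4]; split; first exact: isw_lin.
  move=> i j hij; have [e1 f1] := h2 i j hij; have [e2 f2] := h4 i j hij.
  by rewrite (qe_lin hM) (qf_lin hM) e1 f1 e2 f2 scaler0 addr0.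
have Pz : P 0.
  split; first exact: isw0.
  by move=> i j _; rewrite (lin0 (qe_lin hM i j)) (lin0 (qf_lin hM i j)).
have Pv : P v by split.
have Ppv : P (qpar M v).
  split.
    by move=> k; rewrite (qe_even hM) hvw (linZ hqp).
  move=> i j hij; have [e1 f1] := hvr i j hij.
  by rewrite (qe_even hM) (qf_odd hM) e1 f1 (lin0 hqp) oppr0.
have n2 : (2%:R : F) != 0 by move/pcharf0P: hF => ->.
pose v0 := (2%:R : F)^-1 *: (v + qpar M v).
pose v1 := (2%:R : F)^-1 *: (v - qpar M v).
have ev : v = v0 + v1.
  rewrite /v0 /v1 -scalerDr addrACA subrr addr0.
  by rewrite -mulr2n -scaler_nat scalerA mulVf // scale1r.
have pq0 : qpar M v0 = v0.
  by rewrite /v0 (linZ hqp) (linD hqp) (qpar_invol hM) addrC.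
have pq1 : qpar M v1 = - v1.
  by rewrite /v1 (linZ hqp) (linB hqp) (qpar_invol hM) -scalerN opprB.
have P0 : P v0.
  rewrite /v0 -[_ *: _]addr0; apply: (Pc _ _ _ _ Pz).
  by have := Pc 1 _ _ Pv Ppv; rewrite scale1r.
have P1 : P v1.
  rewrite /v1 -[_ *: _]addr0; apply: (Pc _ _ _ _ Pz).
  by have := Pc (-1) _ _ Ppv Pv; rewrite scaleN1r addrC.
case: (eqVneq v0 0) => h0.
  have h1 : v1 != 0 by move: hv0; rewrite ev h0 add0r.
  by case: P1 => a b; apply: (main_hw hF hM (v := v1) (eps := true) h1 a b pq1 hsimple hi0).
by case: P0 => a b; apply: (main_hw hF hM (v := v0) (eps := false) h0 a b pq0 hsimple hi0).
Qed.
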